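(* Let $\Gamma$ be a gain operator on $\ell^\infty_+(\mathcal I)$ with $|\mathcal I|<\infty$. Then $\Gamma$ satisfies the NJI condition if and only if $\Gamma$ satisfies the uniform NJI condition.
   Context: Let $\mathcal I$ be a nonempty countable index set; $\ell^\infty_+(\mathcal I)$ is the cone of nonnegative real families $s=(s_i)_{i\in\mathcal I}$ with $\|s\|:=\sup_i|s_i|<\infty$; $s^1\le s^2$ means componentwise; $s>0$ means $s\ge0$, $s\ne0$; $\Gamma(s)\not\ge s$ means it is not the case that $\Gamma(s)\ge s$. $\mathcal K_\infty$: continuous strictly increasing unbounded $\gamma:\mathbb R_+\to\mathbb R_+$ with $\gamma(0)=0$. For $\mathcal J\subset\mathcal I$, $s_{|\mathcal J}$ agrees with $s$ on $\mathcal J$ and is $0$ elsewhere. Gain operator: for each $i$ a finite (possibly empty) $\mathcal I_i\subset\mathcal I\setminus\{i\}$; directed graph $\mathcal G$ with vertices $\mathcal I$ and edges $ji$, $j\in\mathcal I_i$; a pointwise equicontinuous family $\gamma_{ij}\in\mathcal K_\infty$ ($ji\in E(\mathcal G)$); functions $\mu_i:\ell^\infty_+(\mathcal I)\to[0,\infty]$ with (M1) some $\xi\in\mathcal K_\infty$ has $\mu_i(0)=0$, $\mu_i(s)\ge\xi(\|s\|)$ for all $i,s$; (M2) $\mu_i$ monotone; (M3) for each finite $\mathcal J$, $\mu_i$ restricted to vectors vanishing off $\mathcal J$ is finite-valued and continuous; (M4) for each norm-bounded $A$ and $\varepsilon>0$ there is $\delta>0$ with $\sup_i|\mu_i(s_{|\mathcal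 I_i})-\mu_i(s^0_{|\mathcal I_i})|\le\varepsilon$ whenever $s^0\in A$, $\|s-s^0\|\le\delta$. $\Gamma_i(s):=\mu_i([\gamma_{ij}(s_j)]_{j\in\mathcal I_i})$ (argument zero outside $\mathcal I_i$). $\mathcal N^-_i(n)$ is the set of vertices $j$ from which there is a directed path to $i$ of length at most $n$ ($\mathcal N^-_i(0)=\{i\}$). NJI condition: $\Gamma(s)\not\ge s$ for all $s>0$. Uniform NJI condition: for all $r,\varepsilon>0$ there are $n\in\mathbb N$ and $\delta>0$ such that for all $s\in\ell^\infty_+(\mathcal I)$ and $i\in\mathcal I$ with $s_i\ge\varepsilon$ and $\|s\|\le r$ there is $j\in\mathcal N^-_i(n)$ with $s_j\ge\delta$ and $\Gamma_j(s)<s_j$. *)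

(* Defs.v *)
From HB Require Import structures.
From mathcomp Require Import all_boot all_order all_algebra.
From mathcomp Require Import all_classical all_reals all_analysis.
Set Implicit Arguments. Unset Strict Implicit. Unset Printing Implicit Defensive.
Import Order.TTheory GRing.Theory Num.Theory.
Local Open Scope classical_set_scope.
Local Open Scope ring_scope.
Import numFieldNormedType.Exports.

(* The index set is a (nonempty) finite type I; an element of
   l^oo_+(I) is a function s : I -> R with nonnegative values. *)

(* class K_oo on R_+ (functions R -> R, only their values on [0,oo) matter) *)
Definition Kinf (R : realType) (g : R -> R) : Prop :=
  [/\ g 0 = 0,
      {within [set x : R | 0 <= x], continuous g},
      (forall x y : R, 0 <= x -> x < y -> g x < g y) &
      (forall M : R, exists x : R, 0 <= x /\ M < g x)].

Definition supnorm (R : realType) (I : finType) (s : I -> R) : R :=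
  \big[Num.max/0]_(i : I) `|s i|.

Definition nonneg (R : realType) (I : finType) (s : I -> R) : Prop :=
  forall i, 0 <= s i.

Definition restrict (R : realType) (I : finType) (J : {set I}) (s : I -> R)
  : I -> R := fun j => if j \in J then s j else 0.

Definition Gamma_i (R : realType) (I : finType) (Ii : I -> {set I})
  (gamma : I -> I -> R -> R) (mu : I -> (I -> R) -> \bar R) (i : I) (s : I -> R)
  : \bar R :=
  mu i (restrict (Ii i) (fun j => gamma i j (s j))).

(* j is in N^-_i(n): there is a directed path of length <= n from j to i in
   the graph with edges j -> k for j in I_k *)
Definition in_Nminus (I : finType) (Ii : I -> {set I}) (n : nat) (i j : I)
  : Prop :=
  exists p : seq I,
    [/\ path (fun a b => a \in Ii b) j p, last j p = i & (size p <= n)%N].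

Definition is_gain_operator (R : realType) (I : finType) (Ii : I -> {set I})
  (gamma : I -> I -> R -> R) (mu : I -> (I -> R) -> \bar R) : Prop :=
      (forall i, i \notin Ii i) /\
      (forall i j, j \in Ii i -> Kinf (gamma i j)) /\
      (forall x : R, 0 <= x -> forall eps : R, 0 < eps ->
         exists2 d : R, 0 < d & forall i j, j \in Ii i ->
           forall y : R, 0 <= y -> `|y - x| < d ->
             `|gamma i j y - gamma i j x| < eps) /\
      (exists xi : R -> R, Kinf xi /\
         forall i, mu i (fun _ => 0) = 0%E /\
           forall s, nonneg s -> ((xi (supnorm s))%:E <= mu i s)%E) /\
      (forall i (s1 s2 : I -> R), nonneg s1 -> (forall j, s1 j <= s2 j) ->
         (mu i s1 <= mu i s2)%E) /\
      (forall i (J : {set I}),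
         let D := fun s : I -> R => nonneg s /\ forall j, j \notin J -> s j = 0 in
         (forall s, D s -> mu i s \is a fin_num) /\
         (forall s0, D s0 -> forall eps : R, 0 < eps ->
            exists2 d : R, 0 < d & forall s, D s ->
              supnorm (fun j => s j - s0 j) < d ->
              `|fine (mu i s) - fine (mu i s0)| < eps)) /\
      (forall A : set (I -> R), (forall s, A s -> nonneg s) ->
         (exists r : R, forall s, A s -> supnorm s <= r) ->
         forall eps : R, 0 < eps ->
         exists2 d : R, 0 < d & forall s0 s, A s0 -> nonneg s ->
           supnorm (fun j => s j - s0 j) <= d ->
           forall i, (`|mu i (restrict (Ii i) s) - mu i (restrict (Ii i) s0)|
                        <= eps%:E)%E).

Definition NJI (R : realType) (I : finType) (Ii : I -> {set I})
  (gamma : I -> I -> R -> R) (mu : I -> (I -> R) -> \bar R) : Prop :=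
  forall s : I -> R, nonneg s -> s <> (fun _ => 0) ->
    ~ (forall i, ((s i)%:E <= Gamma_i Ii gamma mu i s)%E).

Definition uniform_NJI (R : realType) (I : finType) (Ii : I -> {set I})
  (gamma : I -> I -> R -> R) (mu : I -> (I -> R) -> \bar R) : Prop :=
  forall r eps : R, 0 < r -> 0 < eps ->
    exists n : nat, exists2 delta : R, 0 < delta &
      forall (s : I -> R) (i : I), nonneg s -> eps <= s i -> supnorm s <= r ->
        exists j : I, [/\ in_Nminus Ii n i j, delta <= s j &
                          (Gamma_i Ii gamma mu j s < (s j)%:E)%E].

(* Main.v *)
From HB Require Import structures.
From mathcomp Require Import all_boot all_order all_algebra.
From mathcomp Require Import all_classical all_reals all_analysis.
Require Import Defs.
Set Implicit Arguments. Unset Strict Implicit. Unset Printing Implicit Defensive.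
Import Order.TTheory GRing.Theory Num.Theory.
Local Open Scope classical_set_scope.
Local Open Scope ring_scope.
Import numFieldNormedType.Exports.
Import ArrowAsProduct.
From mathcomp Require Import lra.

Lemma Kinf_ge0 (R : realType) (g : R -> R) x : Kinf g -> 0 <= x -> 0 <= g x.
Proof.
case=> g0 _ gi _; rewrite le_eqVlt => /orP[/eqP <-|x0]; first by rewrite g0.
by rewrite -g0 ltW // gi.
Qed.

Lemma supnorm_ge (R : realType) (I : finType) (s : I -> R) i : `|s i| <= supnorm s.
Proof. rewrite /supnorm; apply: (le_bigmax 0 (fun i => `|s i|)). Qed.

Lemma supnorm_ge0 (R : realType) (I : finType) (s : I -> R) : 0 <= supnorm s.
Proof. exact: bigmax_ge_id. Qed.

Lemma supnorm_lt (R : realType) (I : finType) (s : I -> R) d :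
  0 < d -> (forall i, `|s i| < d) -> supnorm s < d.
Proof. by move=> d0 H; apply: bigmax_lt. Qed.

Lemma coord_nbhs (R : realType) (I : finType) (f : I -> R) i (e : R) :
  0 < e -> nbhs f [set g : I -> R | `|g i - f i| < e].
Proof.
move=> e0. have H := @proj_continuous I (fun _ => R) i f.
have Hb : nbhs (f i : R) (ball (f i) e) := @nbhsx_ballx R R (f i) e e0.
have H2 := H _ Hb.
have E : [set g : I -> R | `|g i - f i| < e] = proj i @^-1` (ball (f i) e).
  by apply/seteqP; split => g /=; rewrite /proj /ball /= distrC.
rewrite E.
Timeout 20 exact: H2.
Qed.

Lemma Gamma_ge0 (R : realType) (I : finType) (Ii : I -> {set I})
  (gamma : I -> I -> R -> R) (mu : I -> (I -> R) -> \bar R) :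
  is_gain_operator Ii gamma mu ->
  forall j s, nonneg s -> (0 <= Gamma_i Ii gamma mu j s)%E.
Proof.
case=> _ [HK [_ [[xi [Kxi Hxi]] _]]] j s s0.
have tnn : nonneg (restrict (Ii j) (fun k => gamma j k (s k))).
  move=> k; rewrite /restrict; case: ifP => // kI.
  exact: Kinf_ge0 (HK _ _ kI) (s0 k).
apply: le_trans ((Hxi j).2 _ tnn); rewrite lee_fin.
exact: Kinf_ge0 Kxi (supnorm_ge0 _).
Qed.

Lemma tD (R : realType) (I : finType) (Ii : I -> {set I})
  (gamma : I -> I -> R -> R) j s :
  (forall i j, j \in Ii i -> Kinf (gamma i j)) -> nonneg s ->
  nonneg (restrict (Ii j) (fun k => gamma j k (s k))) /\
  (forall k, k \notin Ii j -> restrict (Ii j) (fun k => gamma j k (s k)) k = 0).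
Proof.
move=> HK s0; split.
  move=> k; rewrite /restrict; case: ifP => // kI.
  exact: Kinf_ge0 (HK _ _ kI) (s0 k).
by move=> k kn; rewrite /restrict (negbTE kn).
Qed.

Lemma Gamma_fin (R : realType) (I : finType) (Ii : I -> {set I})
  (gamma : I -> I -> R -> R) (mu : I -> (I -> R) -> \bar R) :
  is_gain_operator Ii gamma mu ->
  forall j s, nonneg s -> Gamma_i Ii gamma mu j s \is a fin_num.
Proof.
case=> _ [HK [_ [_ [_ [HM3 _]]]]] j s s0.
have [H1 _] := HM3 j (Ii j).
exact: H1 (tD j HK s0).
Qed.

Lemma Gamma_cont (R : realType) (I : finType) (Ii : I -> {set I})
  (gamma : I -> I -> R -> R) (mu : I -> (I -> R) -> \bar R) :
  is_gain_operator Ii gamma mu ->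
  forall j (s0 : I -> R), nonneg s0 -> forall e : R, 0 < e ->
  \forall s \near s0, nonneg s ->
    `|fine (Gamma_i Ii gamma mu j s) - fine (Gamma_i Ii gamma mu j s0)| < e.
Proof.
move=> G j s0 s00 e e0; case: G => _ [HK [Heq [_ [_ [HM3 _]]]]].
have [_ H2] := HM3 j (Ii j).
have [d d0 Hd] := H2 _ (tD j HK s00) e e0.
have Hk : forall k, \forall s \near s0, nonneg s -> k \in Ii j ->
    `|gamma j k (s k) - gamma j k (s0 k)| < d.
  move=> k; have [d' d'0 Hd'] := Heq (s0 k) (s00 k) d d0.
  apply: filterS (coord_nbhs s0 k d'0) => s /= Hs sn kI.
  exact: Hd' j k kI (s k) (sn k) Hs.
have FS : Filter (nbhs s0) := @nbhs_filter (prod_topology (fun _ : I => R)) s0.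
have HH := filter_forall FS Hk.
apply: (@filterS _ _ FS _ _ _ HH) => s /= Hs sn; apply: Hd (tD j HK sn) _.
apply: supnorm_lt => [//|k]; rewrite /restrict; case: ifP => kI.
  exact: Hs k sn kI.
by rewrite subr0 normr0.
Qed.

Lemma reach_short (I : finType) (Ii : I -> {set I}) i j p :
  path (fun a b => a \in Ii b) j p -> last j p = i -> in_Nminus Ii #|I| i j.
Proof.
move=> Hp; case: (shortenP Hp) => p' Hp' Hu _ Hl.
exists p'; split => //.
move/card_uniqP: Hu => Hc.
have := @max_card I (mem (j :: p')); rewrite Hc /= => H.
exact: ltnW.
Qed.

Theorem proposition2p18 (R : realType) (I : finType) (Ii : I -> {set I})
  (gamma : I -> I -> R -> R) (mu : I -> (I -> R) -> \bar R) :
  (0 < #|I|)%N ->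
  is_gain_operator Ii gamma mu ->
  (NJI Ii gamma mu <-> uniform_NJI Ii gamma mu).
Proof.
move=> _ G; split; last first.
  move=> Hu s sn sne Hge.
  have [i si] : exists i, s i != 0.
    apply: contrapT => Hn; apply: sne; apply/funext => k.
    case: (eqVneq (s k) 0) => // Hk; exfalso; apply: Hn; by exists k.
  have si0 : 0 < s i by rewrite lt_def si sn.
  have r0 : 0 < supnorm s.
    exact: lt_le_trans si0 (le_trans (ler_norm _) (supnorm_ge s i)).
  have [n [delta d0 Hd]] := Hu (supnorm s) (s i) r0 si0.
  have [j [_ _ Hlt]] := Hd s i sn (lexx _) (lexx _).
  by have := Hge j; rewrite leNgt Hlt.
move=> Hnji r eps r0 eps0.
pose n := #|I|.
pose Gm := Gamma_i Ii gamma mu.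
pose bad (i : I) (d : R) (s : I -> R) := [/\ nonneg s, eps <= s i, supnorm s <= r &
  forall j, in_Nminus Ii n i j -> d <= s j -> ((s j)%:E <= Gm j s)%E].
have badW : forall i d d' s, d <= d' -> bad i d s -> bad i d' s.
  move=> i d d' s dd' [a b c H]; split => // j jN dj; apply: H => //.
  exact: le_trans dd' dj.
suff [delta d0 Hd] : exists2 delta, 0 < delta & forall s i, ~ bad i delta s.
  exists n, delta => // s i sn si sr.
  apply: contrapT => Hne; apply: (Hd s i); split => // j jN dj.
  rewrite leNgt; apply/negP => Hlt; apply: Hne; exists j; split => //.
apply: contrapT => Hno.
have Hall : forall d, 0 < d -> exists i s, bad i d s.
  move=> d d0; apply: contrapT => Hn; apply: Hno; exists d => // s i Hb.
  by apply: Hn; exists i, s.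
have [i Hi] : exists i, forall d, 0 < d -> exists s, bad i d s.
  apply: contrapT => Hn.
  have Hn' : forall i, exists d, 0 < d /\ forall s, ~ bad i d s.
    move=> i; apply: contrapT => Hm; apply: Hn; exists i => d d0.
    apply: contrapT => Hs; apply: Hm; exists d; split => // s Hb.
    by apply: Hs; exists s.
  have [D HD] := choice Hn'.
  pose dm := \big[Num.min/1]_(k : I) D k.
  have dm0 : 0 < dm.
    by apply/bigmin_gtP; split => // k _; exact: (HD k).1.
  have [k [s Hs]] := Hall dm dm0.
  have Hk := (HD k).2 s; apply: Hk; apply: badW Hs; exact: bigmin_le.
pose B d := [set s | bad i d s].
pose F := filter_from [set d : R | 0 < d] B.
have FF : ProperFilter F.
  apply: filter_from_proper.
    apply: filter_from_filter; first by exists 1; rewrite /= ltr01.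
    move=> d1 d2 d10 d20; exists (Num.min d1 d2); first by rewrite /= lt_min d10 d20.
    by move=> s Hs; split; apply: badW Hs; rewrite ge_min lexx ?orbT.
  by move=> d d0; have [s Hs] := Hi d d0; exists s.
pose K := [set f : I -> R | forall k, `[0, r]%classic (f k)].
have cK : compact K.
  exact: (@tychonoff I (fun _ => R) (fun _ => `[0,r]%classic) (fun _ => @segment_compact R 0 r)).
have FK : F K.
  exists 1; first exact: ltr01.
  move=> s [sn _ sr _] k /=; rewrite in_itv /= sn /=.
  apply: le_trans sr; apply: le_trans (supnorm_ge s k); exact: ler_norm.
have [ss [Kss Css]] := cK F FF FK.
have ssn : nonneg ss by move=> k; have := Kss k; rewrite /= in_itv => /andP[].
have Hmeet : forall d, 0 < d -> forall P, nbhs ss P -> exists s, bad i d s /\ P s.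
  move=> d d0 P HP.
  have FB : F (B d) by exists d.
  have [s [Hs1 Hs2]] := Css (B d) P FB HP.
  by exists s.
have ssi : eps <= ss i.
  rewrite leNgt; apply/negP => Hlt.
  have e0 : 0 < eps - ss i by rewrite subr_gt0.
  have [s [[_ si _ _] Hs]] := Hmeet 1 ltr01 _ (coord_nbhs ss i e0).
  have := ler_norm (s i - ss i); rewrite /= in Hs; lra.
have ssG : forall j, in_Nminus Ii n i j -> 0 < ss j -> ((ss j)%:E <= Gm j ss)%E.
  move=> j jN sj0; rewrite leNgt; apply/negP => Hlt.
  have Gf : Gm j ss \is a fin_num := Gamma_fin G j ssn.
  have G0 : (0 <= Gm j ss)%E := Gamma_ge0 G j ssn.
  have gE : Gm j ss = (fine (Gm j ss))%:E by rewrite fineK.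
  rewrite gE lte_fin in Hlt; rewrite gE lee_fin in G0.
  have e0 : 0 < (ss j - fine (Gm j ss)) / 2 by lra.
  have FS : Filter (nbhs ss) := @nbhs_filter (prod_topology (fun _ : I => R)) ss.
  have HP := @filterI _ _ FS _ _ (Gamma_cont G j ssn e0) (coord_nbhs ss j e0).
  have dpos : 0 < (ss j + fine (Gm j ss)) / 2 by lra.
  have [s [[sn _ _ Hb] [H1 H2]]] := Hmeet _ dpos _ HP.
  move: H2; rewrite /= ltr_norml => /andP[H2 H3].
  have Hsj := Hb j jN (ltac:(lra)).
  have Gsf : Gm j s \is a fin_num := Gamma_fin G j sn.
  rewrite -(fineK Gsf) lee_fin in Hsj.
  move: (H1 sn); rewrite ltr_norml => /andP[H4 H5].
  lra.
pose A := finset (fun j => `[< exists p, path (fun a b => a \in Ii b) j p /\ last j p = i >]).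
have Ai : i \in A by rewrite inE; apply/asboolP; exists [::].
have Aclosed : forall j k, j \in A -> k \in Ii j -> k \in A.
  move=> j k; rewrite inE => /asboolP [p [Hp Hl]] kj.
  rewrite inE; apply/asboolP.
  exists (j :: p); split; last by [].
  by rewrite /= kj.
have AN : forall j, j \in A -> in_Nminus Ii n i j.
  move=> j; rewrite inE => /asboolP [p [Hp Hl]]; exact: reach_short Hp Hl.
pose s' := restrict A ss.
have s'n : nonneg s'.
  by move=> k; rewrite /s' /restrict; case: ifP => // _; exact: ssn k.
apply: (Hnji s' s'n).
  move=> H0; have := congr1 (fun f => f i) H0; rewrite /= /s' /restrict Ai => ssi0.
  lra.
have Gs' : forall j, j \in A -> Gm j s' = Gm j ss.
  move=> j jA; rewrite /Gm /Gamma_i; congr (mu j _); apply/funext => k.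
  rewrite /restrict; case: ifP => // kI.
  by rewrite /s' /restrict (Aclosed j k jA kI).
move=> j; change ((s' j)%:E <= Gm j s')%E.
case: (boolP (j \in A)) => jA.
  rewrite Gs' // /s' /restrict jA.
  have := ssn j; rewrite le_eqVlt => /orP[/eqP <-|sj0].
    exact: (Gamma_ge0 G j ssn).
  exact: ssG j (AN j jA) sj0.
rewrite /s' /restrict (negbTE jA); exact: (Gamma_ge0 G j s'n).
Qed.
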